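(* Let $\mathbb X,\mathbb H,\mathbb Y$ be separable real Hilbert spaces, $\mathbf W\colon\mathbb X\to\mathbb H$ and $\mathbf A\colon\mathbb H\to\mathbb Y$ bounded linear operators, $\mathcal R\colon\mathbb X\to[0,\infty]$ proper, convex and weakly lower semicontinuous, $(\phi_\lambda)_{\lambda\in\Lambda}$ an orthonormal basis of $\mathbb H$ indexed by a countable set $\Lambda$, and $(\kappa_\lambda)_{\lambda\in\Lambda}$ weights with $\kappa_\lambda\ge a$ for all $\lambda$, for some $a>0$. Assume there is $x\in\mathbb X$ with $\mathcal R(x)+\|\mathbf W x\|_{1,\kappa}<\infty$. Suppose $(x_\star,h_\star,y_\star)\in\mathbb X\times\mathbb H\times\mathbb Y$ satisfies the following: (1.1) $\mathbf W x_\star=h_\star$ and $\mathbf A h_\star=y_\star$; (1.2) there is $u\in\mathbb H$ with $\mathbf W^*u\in\partial\mathcal R(x_\star)$; (1.3) there is $v\in\mathbb Y$ with $\eta:=\mathbf A^*v-u\in\partial\|\cdot\|_{1,\kappa}(h_\star)$; (1.4) the restriction $\mathbf A_{\Omega[\eta]}\colon\mathbb H_{\Omega[\eta]}\to\mathbb Y$ is injective. Let $C>0$. Then for every $\delta>0$, every $y^\delta\in\mathbb Y$ with $\|y^\delta-y_\star\|\le\delta$, $\alpha=C\delta$, and every minimizer $(x_\alpha^\delta,h_\alpha^\delta)$ of $$\mathcal B_{\alpha,y^\delta}(x,h)=\tfrac12\|\mathbf W x-h\|^2+\tfrac12\|\mathbf A h-y^\delta\|^2+\alpha\big(\mathcal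 R(x)+\|h\|_{1,\kappa}\big)$$ over $\mathbb X\times\mathbb H$, we have $$\mathcal D^{\mathcal R}_{\mathbf W^*u}(x_\alpha^\delta,x_\star)\le c_{(u,v)}\,\delta,\qquad \|h_\alpha^\delta-h_\star\|\le d_{(u,v)}\,\delta,$$ where $\|(u,v)\|=(\|u\|^2+\|v\|^2)^{1/2}$, $$c_{(u,v)}=\frac{(1+C\|(u,v)\|)^2}{2C},\qquad d_{(u,v)}=2\|\mathbf A_{\Omega[\eta]}^{-1}\|\,(1+C\|(u,v)\|)+\frac{1+\|\mathbf A_{\Omega[\eta]}^{-1}\|\,\|\mathbf A\|}{m[\eta]}\,c_{(u,v)}.$$
   Context: Weighted $\ell^1$ norm: $\|h\|_{1,\kappa}=\sum_{\lambda\in\Lambda}\kappa_\lambda|\langle\phi_\lambda,h\rangle|\in[0,\infty]$ for $h\in\mathbb H$. Subdifferential: $\xi\in\partial\mathcal F(z_\star)$ iff $\mathcal F(z)\ge\mathcal F(z_\star)+\langle\xi,z-z_\star\rangle$ for all $z$. Bregman distance: for $\xi\in\partial\mathcal F(z_\star)$, $\mathcal D^{\mathcal F}_\xi(z,z_\star)=\mathcal F(z)-\mathcal F(z_\star)-\langle\xi,z-z_\star\rangle$. For $\eta=\sum_\lambda\eta_\lambda\phi_\lambda\in\partial\|\cdot\|_{1,\kappa}(h_\star)$ (which forces $|\eta_\lambda|\le\kappa_\lambda$ for all $\lambda$), set $\Omega[\eta]=\{\lambda\in\Lambda: |\eta_\lambda|=\kappa_\lambda\}$ (a finite set) and $m[\eta]=\min\{\kappa_\lambda-|\eta_\lambda|:\lambda\notin\Omega[\eta]\}>0$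 (with the term involving $1/m[\eta]$ read as $0$ if $\Lambda=\Omega[\eta]$). For finite $\Omega\subseteq\Lambda$: $\mathbb H_\Omega=\operatorname{span}\{\phi_\lambda:\lambda\in\Omega\}$, $\mathbf A_\Omega=\mathbf A|_{\mathbb H_\Omega}\colon\mathbb H_\Omega\to\mathbb Y$, and when $\mathbf A_\Omega$ is injective, $\|\mathbf A_\Omega^{-1}\|$ is the operator norm of its inverse $\operatorname{ran}(\mathbf A_\Omega)\to\mathbb H_\Omega$. *)

(* Defs.v *)
From HB Require Import structures.
From mathcomp Require Import all_boot all_order all_algebra.
From mathcomp Require Import all_classical all_reals all_analysis.
Set Implicit Arguments. Unset Strict Implicit. Unset Printing Implicit Defensive.
Import Order.TTheory GRing.Theory Num.Theory.
Import numFieldNormedType.Exports.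
Local Open Scope classical_set_scope.
Local Open Scope ring_scope.

Section Defs.
Variable R : realType.

Definition inner_product_of (V : normedModType R) (ip : V -> V -> R) : Prop :=
  (forall x y, ip x y = ip y x) /\
  (forall (a : R) (x y z : V), ip (a *: x + y) z = a * ip x z + ip y z) /\
  (forall x, ip x x = `|x| ^+ 2).

Definition separable_hilbert (V : completeNormedModType R) (ip : V -> V -> R) : Prop :=
  inner_product_of ip /\ exists D : set V, countable D /\ closure D = setT.

Definition is_adjoint (V U : normedModType R) (ipV : V -> V -> R) (ipU : U -> U -> R)
  (W : V -> U) (Wadj : U -> V) : Prop :=
  forall x u, ipV x (Wadj u) = ipU (W x) u.

Definition bounded_linear (V U : normedModType R) (W : {linear V -> U}) : Prop :=
  continuous W.

Definition opnorm (V U : normedModType R) (W : V -> U) : R :=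
  sup [set `|W h| | h in [set h : V | `|h| <= 1]].

Definition orthonormal_basis (Lam : choiceType) (H : normedModType R)
  (ip : H -> H -> R) (phi : Lam -> H) : Prop :=
  (forall l l', ip (phi l) (phi l') = (l == l')%:R) /\
  (forall h, (forall l, ip (phi l) h = 0) -> h = 0).

Definition wl1 (Lam : choiceType) (H : normedModType R) (ip : H -> H -> R)
  (phi : Lam -> H) (kappa : Lam -> R) (h : H) : \bar R :=
  \esum_(l in [set: Lam]) (kappa l * `|ip (phi l) h|)%:E.

Definition subdiff (V : normedModType R) (ip : V -> V -> R) (F : V -> \bar R)
  (z0 xi : V) : Prop :=
  forall z, (F z >= F z0 + (ip xi (z - z0)%R)%:E)%E.

Definition bregman (V : normedModType R) (ip : V -> V -> R) (F : V -> \bar R)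
  (xi z z0 : V) : \bar R :=
  (F z - F z0 - (ip xi (z - z0)%R)%:E)%E.

Definition proper_fun (V : Type) (F : V -> \bar R) : Prop :=
  (forall x, (0 <= F x)%E) /\ exists x, (F x < +oo)%E.

Definition convex_fun (V : normedModType R) (F : V -> \bar R) : Prop :=
  forall (x y : V) (t : R), 0 <= t <= 1 ->
    (F (t *: x + (1 - t) *: y)%R <= t%:E * F x + (1 - t)%:E * F y)%E.

(* closedness for the weak topology of the Hilbert space (V, ip): basic weak
   neighbourhoods are {z | forall e in s, |ip (z - x) e| < eps} *)
Definition weakly_closed (V : normedModType R) (ip : V -> V -> R) (S : set V) : Prop :=
  forall x, ~ S x -> exists (s : seq V) (eps : R), 0 < eps /\
    forall z, (forall e, e \in s -> `|ip (z - x) e| < eps) -> ~ S z.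

Definition weakly_lsc (V : normedModType R) (ip : V -> V -> R) (F : V -> \bar R) : Prop :=
  forall c : R, weakly_closed ip [set x | (F x <= c%:E)%E].

Definition Omega (Lam : choiceType) (H : normedModType R) (ip : H -> H -> R)
  (phi : Lam -> H) (kappa : Lam -> R) (eta : H) : set Lam :=
  [set l | `|ip (phi l) eta| = kappa l].

Definition mgap (Lam : choiceType) (H : normedModType R) (ip : H -> H -> R)
  (phi : Lam -> H) (kappa : Lam -> R) (eta : H) : R :=
  inf [set kappa l - `|ip (phi l) eta| | l in ~` Omega ip phi kappa eta].

Definition spanH (Lam : choiceType) (H : normedModType R) (phi : Lam -> H)
  (Om : set Lam) : set H :=
  [set h | exists (s : seq Lam) (c : Lam -> R),
     (forall l, l \in s -> Om l) /\ h = \sum_(l <- s) c l *: phi l].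

Definition injective_on (H Y : normedModType R) (A : H -> Y) (S : set H) : Prop :=
  forall h h', S h -> S h' -> A h = A h' -> h = h'.

(* operator norm of the inverse ran(A_Om) -> H_Om of the injective A_Om *)
Definition inv_opnorm (H Y : normedModType R) (A : H -> Y) (S : set H) : R :=
  sup [set `|h| | h in [set h | S h /\ `|A h| <= 1]].

End Defs.

(* Main.v *)
Require Import Defs.
From HB Require Import structures.
From mathcomp Require Import all_boot all_order all_algebra.
From mathcomp Require Import all_classical all_reals all_analysis.
Import Order.TTheory GRing.Theory Num.Theory.
Import numFieldNormedType.Exports.
Local Open Scope classical_set_scope.
Local Open Scope ring_scope.

From mathcomp Require Import ring lra zify.
From Stdlib Require Import Lia.

Module Helpers.
Set Implicit Arguments. Unset Strict Implicit. Unset Printing Implicit Defensive.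

Section IP.
Variables (R : realType) (V : normedModType R) (ip : V -> V -> R).
Hypothesis hip : inner_product_of ip.

Lemma ipC x y : ip x y = ip y x.
Proof. by case: hip. Qed.

Lemma ipDZl a x y z : ip (a *: x + y) z = a * ip x z + ip y z.
Proof. by case: hip => _ []. Qed.

Lemma ipnorm x : ip x x = `|x| ^+ 2.
Proof. by case: hip => _ []. Qed.

Lemma ipDl x y z : ip (x + y) z = ip x z + ip y z.
Proof. by rewrite -[x]scale1r ipDZl mul1r scale1r. Qed.

Lemma ip0l z : ip 0 z = 0.
Proof. have := ipDl 0 0 z; rewrite addr0 => h; lra. Qed.

Lemma ipZl a x z : ip (a *: x) z = a * ip x z.
Proof. by rewrite -[a *: x]addr0 ipDZl ip0l addr0. Qed.

Lemma ipNl x z : ip (- x) z = - ip x z.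
Proof. by rewrite -scaleN1r ipZl mulN1r. Qed.

Lemma ipBl x y z : ip (x - y) z = ip x z - ip y z.
Proof. by rewrite ipDl ipNl. Qed.

Lemma ipDr x y z : ip z (x + y) = ip z x + ip z y.
Proof. by rewrite ipC ipDl ipC [ip y z]ipC. Qed.
Lemma ipZr a x z : ip z (a *: x) = a * ip z x.
Proof. by rewrite ipC ipZl ipC. Qed.
Lemma ip0r z : ip z 0 = 0.
Proof. by rewrite ipC ip0l. Qed.
Lemma ipNr x z : ip z (- x) = - ip z x.
Proof. by rewrite ipC ipNl ipC. Qed.
Lemma ipBr x y z : ip z (x - y) = ip z x - ip z y.
Proof. by rewrite ipDr ipNr. Qed.

Lemma ip_sumr (I : Type) (s : seq I) (F : I -> V) z :
  ip z (\sum_(i <- s) F i) = \sum_(i <- s) ip z (F i).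
Proof.
elim: s => [|i s IH]; first by rewrite !big_nil ip0r.
by rewrite !big_cons ipDr IH.
Qed.

Lemma ip_suml (I : Type) (s : seq I) (F : I -> V) z :
  ip (\sum_(i <- s) F i) z = \sum_(i <- s) ip (F i) z.
Proof. by rewrite ipC ip_sumr; apply: eq_bigr => i _; rewrite ipC. Qed.

Lemma normD_sq x y : `|x + y| ^+ 2 = `|x| ^+ 2 + 2 * ip x y + `|y| ^+ 2.
Proof.
rewrite -!ipnorm ipDl !ipDr [ip y x]ipC; ring.
Qed.

Lemma normB_sq x y : `|x - y| ^+ 2 = `|x| ^+ 2 - 2 * ip x y + `|y| ^+ 2.
Proof. by rewrite normD_sq ipNr normrN; ring. Qed.

Lemma CS x y : `|ip x y| <= `|x| * `|y|.
Proof.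
have [->|y0] := eqVneq y 0; first by rewrite ip0r !normr0 mulr0.
have ny : 0 < `|y| by rewrite normr_gt0.
set b := ip x y; set c := `|y| ^+ 2.
have c0 : 0 < c by rewrite exprn_gt0.
have h0 : 0 <= `|x - (b / c) *: y| ^+ 2 by rewrite sqr_ge0.
rewrite normB_sq ipZr normrZ exprMn real_normK ?num_real // -/b -/c in h0.
have e : `|x| ^+ 2 - 2 * (b / c * b) + (b / c) ^+ 2 * c = `|x| ^+ 2 - b ^+ 2 / c.
  by field; rewrite gt_eqF.
rewrite e in h0.
have h1 : b ^+ 2 <= `|x| ^+ 2 * c.
  have -> : `|x| ^+ 2 * c = c * (`|x| ^+ 2 - b ^+ 2 / c) + b ^+ 2 by field; rewrite gt_eqF.
  by rewrite lerDr mulr_ge0 // ltW.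
have h2 : `|b| ^+ 2 <= (`|x| * `|y|) ^+ 2 by rewrite real_normK ?num_real // exprMn.
have h3 : 0 <= `|b| by [].
have h4 : 0 <= `|x| * `|y| by rewrite mulr_ge0.
nra.
Qed.

End IP.

Section ONB.
Variables (R : realType) (H : normedModType R) (ip : H -> H -> R).
Hypothesis hip : inner_product_of ip.
Variables (Lam : choiceType) (phi : Lam -> H).
Hypothesis hon : forall l l', ip (phi l) (phi l') = (l == l')%:R.

Definition Psum (s : seq Lam) (c : Lam -> R) := \sum_(l <- s) c l *: phi l.

Lemma coef_Psum s c l : uniq s ->
  ip (phi l) (Psum s c) = if l \in s then c l else 0.
Proof.
rewrite /Psum; elim: s => [|a s IH] /=; first by rewrite big_nil ip0r.
move=> /andP[nas us]; rewrite big_cons ipDr // ipZr // hon // IH // in_cons.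
have [->|nla] := eqVneq l a.
  by rewrite (negbTE nas) mulr1 addr0.
by rewrite mulr0 add0r.
Qed.

Lemma norm_phi l : `|phi l| = 1.
Proof.
apply/eqP; rewrite -sqrp_eq1 //; apply/eqP.
by rewrite -(ipnorm hip) hon eqxx.
Qed.

Lemma norm_Psum_le s c : `|Psum s c| <= \sum_(l <- s) `|c l|.
Proof.
rewrite /Psum; apply: le_trans (ler_norm_sum _ _ _) _.
by apply: ler_sum => l _; rewrite normrZ norm_phi mulr1.
Qed.

Lemma norm_Psum_sq s c : uniq s -> `|Psum s c| ^+ 2 = \sum_(l <- s) c l ^+ 2.
Proof.
move=> us; rewrite -(ipnorm hip) {1}/Psum (ip_suml hip) big_seq [RHS]big_seq.
by apply: eq_bigr => l ls; rewrite ipZl // coef_Psum // ls expr2.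
Qed.

Definition coef l y := ip (phi l) y.

Lemma bessel s y : uniq s -> \sum_(l <- s) coef l y ^+ 2 <= `|y| ^+ 2.
Proof.
move=> us.
have e1 : ip y (Psum s (coef^~ y)) = \sum_(l <- s) coef l y ^+ 2.
  rewrite /Psum (ip_sumr hip); apply: eq_bigr => l _.
  by rewrite ipZr // (ipC hip) expr2.
have := normB_sq hip y (Psum s (coef^~ y)).
rewrite e1 norm_Psum_sq // => e.
have : 0 <= `|y - Psum s (coef^~ y)| ^+ 2 by rewrite sqr_ge0.
rewrite e; lra.
Qed.

Lemma enum_bounded (P : Lam -> Prop) (M : nat) :
  (forall s, uniq s -> (forall l, l \in s -> P l) -> (size s <= M)%N) ->
  exists s, uniq s /\ forall l, P l <-> l \in s.
Proof.
move=> hM.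
suff : forall k s, uniq s -> (forall l, l \in s -> P l) -> (M - size s <= k)%N ->
  exists s, uniq s /\ forall l, P l <-> l \in s.
  by move=> h; apply: (h M [::]) => //; rewrite subn0.
elim=> [|k IH] s us sP hk.
  exists s; split => // l; split => [Pl|]; last exact: sP.
  apply/negPn/negP => nls.
  have h2 := hM (l :: s).
  have h3 : (size (l :: s) <= M)%N.
    apply: h2; first by rewrite /= nls us.
    by move=> l'; rewrite in_cons => /orP[/eqP->|/sP].
  move: h3 hk => /=; lia.
have [cov|ncov] := pselect (forall l, P l -> l \in s).
  by exists s; split => // l; split; [exact: cov|exact: sP].
have [l /not_implyP [Pl nls]] := (existsNP _).2 ncov.
apply: (IH (l :: s)).
- by rewrite /= us andbT; apply/negP.
- by move=> l'; rewrite in_cons => /orP[/eqP->|/sP].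
- by move: hk => /=; lia.
Qed.

Lemma finite_big y (e : R) : 0 < e ->
  exists s, uniq s /\ forall l, e <= `|coef l y| <-> l \in s.
Proof.
move=> e0; apply: (@enum_bounded _ (Num.truncn (`|y| ^+ 2 / e ^+ 2))) => s us sP.
have h1 : (size s)%:R * e ^+ 2 <= `|y| ^+ 2.
  apply: (@le_trans _ _ (\sum_(l <- s) coef l y ^+ 2)); last exact: bessel.
  elim: s us sP => [|a s IH] /=; first by rewrite big_nil mul0r.
  move=> /andP[_ us] sP; rewrite big_cons -addn1 natrD mulrDl mul1r addrC lerD //.
    rewrite -[coef a y ^+ 2]real_normK ?num_real // lerXn2r ?nnegrE ?(ltW e0) //.
    exact: sP (mem_head _ _).
  by apply: IH => // l ls; apply: sP; rewrite in_cons ls orbT.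
have e2 : 0 < e ^+ 2 by rewrite exprn_gt0.
have h2 : (size s)%:R <= `|y| ^+ 2 / e ^+ 2 by rewrite ler_pdivlMr.
rewrite -ltnS -(ltr_nat R); apply: le_lt_trans h2 _.
by rewrite truncnS_gt.
Qed.

End ONB.

Section T.
Variables (R : realType) (H : completeNormedModType R) (ip : H -> H -> R).
Hypothesis hip : inner_product_of ip.
Variables (Lam : choiceType) (phi : Lam -> H).
Hypothesis hon : forall l l', ip (phi l) (phi l') = (l == l')%:R.
Hypothesis hcomp : forall h, (forall l, ip (phi l) h = 0) -> h = 0.
Hypothesis hLam : countable [set: Lam].

Lemma normT y M : (forall s, uniq s -> \sum_(l <- s) `|ip (phi l) y| <= M) ->
  `|y| <= M.
Proof.
move=> hM.
have [f finj] := countable_injP _ hLam.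
have hS : forall n, exists s, uniq s /\ forall l, (f l < n)%N <-> l \in s.
  move=> n; apply: (@enum_bounded _ _ n) => s us sP.
  rewrite -(size_map f) -[X in (_ <= X)%N](size_iota 0).
  apply: uniq_leq_size.
    by rewrite map_inj_in_uniq // => a b _ _; apply: finj; rewrite in_setT.
  by move=> k /mapP [l ls ->]; rewrite mem_iota add0n /=; apply: sP.
have [S hS'] := choice hS.
set c := fun l => ip (phi l) y.
set x := fun n => Psum phi (S n) c.
set sg := fun n => \sum_(l <- S n) `|c l|.
have decomp : forall (V : nmodType) (F : Lam -> V) m n, (m <= n)%N ->
    \sum_(l <- S n) F l = \sum_(l <- S m) F l + \sum_(l <- S n | ~~ (f l < m)%N) F l.
  move=> V F m n mn; rewrite (bigID (fun l => (f l < m)%N)) /=; congr (_ + _).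
  rewrite -big_filter; apply: perm_big; apply: uniq_perm.
  - by rewrite filter_uniq //; case: (hS' n).
  - by case: (hS' m).
  move=> l; rewrite mem_filter.
  case: (hS' n) => _ /(_ l) hn; case: (hS' m) => _ /(_ l) hm.
  apply/idP/idP.
    by move=> /andP[lm _]; apply/hm.
  by move=> /hm lm; rewrite lm /=; apply/hn; lia.
have sg_diff : forall m n, (m <= n)%N ->
    sg n - sg m = \sum_(l <- S n | ~~ (f l < m)%N) `|c l|.
  by move=> m n mn; rewrite /sg (decomp _ _ m n mn) addrAC subrr add0r.
have x_diff : forall m n, (m <= n)%N -> `|x n - x m| <= sg n - sg m.
  move=> m n mn; rewrite sg_diff // /x /Psum (decomp _ _ m n mn) addrAC subrr add0r.
  apply: le_trans (ler_norm_sum _ _ _) _.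
  by apply: ler_sum => l _; rewrite normrZ (norm_phi hip hon) mulr1.
have sg_mono : forall m n, (m <= n)%N -> sg m <= sg n.
  move=> m n mn; rewrite -subr_ge0 sg_diff //; exact: sumr_ge0.
have sgM : forall n, sg n <= M by move=> n; apply: hM; case: (hS' n).
have hsup : has_sup (range sg).
  split; first by exists (sg 0%N), 0%N.
  by exists M => _ [n _ <-].
have xcauchy : cauchy (x @ \oo).
  apply: cauchy_exP => e e0.
  have [_ [N _ <-] hN] := sup_adherent e0 hsup.
  exists (x N); exists N => // n /= Nn.
  rewrite -ball_normE /=.
  rewrite distrC.
  apply: le_lt_trans (x_diff _ _ Nn) _.
  have : sg n <= sup (range sg) by apply: sup_upper_bound => //; exists n.
  lra.
have xcvg : cvg (x @ \oo) by apply: cauchy_cvg.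
set z := lim (x @ \oo).
have xz : x @ \oo --> z by [].
have near_z : forall e, 0 < e -> exists N, forall n, (N <= n)%N -> `|z - x n| < e.
  move=> e e0; have := (cvgrPdist_lt _ _).1 xz e e0.
  by move=> [N _ hN]; exists N => n Nn; apply: hN.
have coefz : forall l, ip (phi l) z = c l.
  move=> l; apply/eqP; rewrite -subr_eq0 -normr_le0.
  apply/ler_addgt0Pr => e e0; rewrite add0r.
  have [N hN] := near_z e e0.
  pose n := maxn N (f l).+1.
  have hxn : ip (phi l) (x n) = c l.
    rewrite /x (coef_Psum hip hon); last by case: (hS' n).
    case: (hS' n) => _ /(_ l) [h1 _]; rewrite h1 //.
    rewrite /n; lia.
  rewrite -hxn -(ipBr hip).
  apply: le_trans (CS hip _ _) _; rewrite (norm_phi hip hon) mul1r.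
  by apply: ltW; apply: hN; rewrite /n leq_maxl.
have yz : y = z.
  apply/eqP; rewrite -subr_eq0; apply/eqP; apply: hcomp => l.
  by rewrite (ipBr hip) coefz subrr.
rewrite yz; apply/ler_addgt0Pr => e e0.
have [N hN] := near_z e e0.
have h1 := hN N (leqnn N).
have h2 : `|x N| <= sg N by exact: (norm_Psum_le hip hon (S N) c).
have h3 := sgM N.
have : `|z| <= `|z - x N| + `|x N|.
  by rewrite -[X in `|X| <= _](subrK (x N)); apply: ler_normD.
lra.
Qed.

End T.

Section FD.
Variables (R : realType) (H Y : normedModType R) (ip : H -> H -> R) (ipY : Y -> Y -> R).
Hypotheses (hip : inner_product_of ip) (hipY : inner_product_of ipY).
Variable (A : {linear H -> Y}).
Variables (k : nat) (e : 'I_k -> H).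
Hypothesis he : forall i j, ip (e i) (e j) = (i == j)%:R.
Hypothesis hinj : forall c : 'I_k -> R, A (\sum_i c i *: e i) = 0 -> forall i, c i = 0.

Lemma fd_bound : exists K, 0 <= K /\
  forall c : 'I_k -> R, `|\sum_i c i *: e i| <= K * `|A (\sum_i c i *: e i)|.
Proof.
set w := fun i => A (e i).
set G := \matrix_(i, j) ipY (w i) (w j) : 'M[R]_k.
have AV : forall c : 'I_k -> R, A (\sum_i c i *: e i) = \sum_i c i *: w i.
  by move=> c; rewrite linear_sum; apply: eq_bigr => i _; rewrite linearZ.
have GE : forall (cv : 'rV_k) j, (cv *m G) 0 j = ipY (\sum_i cv 0 i *: w i) (w j).
  move=> cv j; rewrite !mxE (ip_suml hipY); apply: eq_bigr => i _.
  by rewrite mxE (ipZl hipY).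
have Gfree : forall cv : 'rV_k, cv *m G = 0 -> cv = 0.
  move=> cv h; set v := \sum_i cv 0 i *: w i.
  have hv : ipY v v = 0.
    rewrite {2}/v (ip_sumr hipY) big1 // => j _.
    by rewrite (ipZr hipY) -GE h mxE mulr0.
  rewrite (ipnorm hipY) in hv.
  have v0 : v = 0.
    have : `|v| ^+ 2 == 0 by rewrite hv.
    by rewrite expf_eq0 /= normr_eq0 => /eqP.
  have hc := hinj (c := fun i => cv 0 i).
  apply/rowP => j; rewrite mxE; apply: hc; by rewrite AV.
have Gunit : G \in unitmx.
  rewrite -row_free_unit -kermx_eq0; apply/eqP/row_matrixP => i.
  by rewrite row0; apply: Gfree; rewrite -row_mul mulmx_ker row0.
set Gi := invmx G.
exists (\sum_i \sum_j `|w j| * `|Gi j i|); split.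
  by apply: sumr_ge0 => i _; apply: sumr_ge0 => j _; rewrite mulr_ge0.
move=> c; set cv := \row_i c i.
set Av := A (\sum_i c i *: e i).
have ci : forall i, `|c i| <= (\sum_j `|w j| * `|Gi j i|) * `|Av|.
  move=> i.
  have -> : c i = (cv *m G *m Gi) 0 i by rewrite mulmxK // mxE.
  rewrite mxE mulr_suml; apply: le_trans (ler_norm_sum _ _ _) _.
  apply: ler_sum => j _; rewrite normrM mulrAC ler_wpM2r //.
  rewrite GE.
  have -> : \sum_i0 cv 0 i0 *: w i0 = Av by rewrite /Av AV; apply: eq_bigr => i0 _; rewrite mxE.
  by rewrite mulrC; apply: (CS hipY).
have ne : forall i, `|e i| = 1.
  move=> i; apply/eqP; rewrite -sqrp_eq1 //; apply/eqP.
  by rewrite -(ipnorm hip) he eqxx.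
apply: le_trans (ler_norm_sum _ _ _) _.
rewrite mulr_suml; apply: ler_sum => i _.
by rewrite normrZ ne mulr1.
Qed.

End FD.

Section Span.
Variables (R : realType) (H Y : normedModType R) (ip : H -> H -> R) (ipY : Y -> Y -> R).
Hypotheses (hip : inner_product_of ip) (hipY : inner_product_of ipY).
Variables (Lam : choiceType) (phi : Lam -> H).
Hypothesis hon : forall l l', ip (phi l) (phi l') = (l == l')%:R.
Variables (Om : set Lam) (s0 : seq Lam).
Hypotheses (us0 : uniq s0) (hs0 : forall l, Om l <-> l \in s0).

Lemma span_repr g : spanH phi Om g -> g = Psum phi s0 (fun l => ip (phi l) g).
Proof.
move=> [s [c [sOm ->]]].
set g0 := \sum_(l <- s) c l *: phi l.
set d := g0 - Psum phi s0 (fun l => ip (phi l) g0).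
have dperp : forall l, l \in s0 -> ip (phi l) d = 0.
  by move=> l ls; rewrite (ipBr hip) (coef_Psum hip hon) // ls subrr.
have : ip d d = 0.
  rewrite {2}/d (ipBr hip) {2}/g0 (ip_sumr hip) /Psum (ip_sumr hip).
  rewrite big_seq big1 => [|l ls]; last first.
    rewrite (ipZr hip) (ipC hip); apply/eqP; rewrite mulf_eq0; apply/orP; right; apply/eqP.
    by apply: dperp; apply/hs0/sOm.
  rewrite big_seq big1 => [|l ls]; last first.
    by rewrite (ipZr hip) (ipC hip d) dperp ?mulr0.
  by rewrite subr0.
rewrite (ipnorm hip) => /eqP; rewrite expf_eq0 /= normr_eq0 subr_eq0 => /eqP.
by [].
Qed.

Variable (A : {linear H -> Y}).
Hypothesis hinj : injective_on A (spanH phi Om).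

Lemma span0 : spanH phi Om 0.
Proof. by exists [::], (fun=> 0); split => //; rewrite big_nil. Qed.

Lemma span_fd : exists K, 0 <= K /\ forall g, spanH phi Om g -> `|g| <= K * `|A g|.
Proof.
set t := in_tuple s0.
set e := fun i : 'I_(size s0) => phi (tnth t i).
have tinj : injective (tnth t) by apply/tuple_uniqP.
have he : forall i j, ip (e i) (e j) = (i == j)%:R.
  by move=> i j; rewrite hon (inj_eq tinj).
have hinj' : forall c : 'I_(size s0) -> R, A (\sum_i c i *: e i) = 0 -> forall i, c i = 0.
  move=> c hc.
  set c' := fun l => oapp c 0 (insub (index l s0) : option 'I_(size s0)).
  have ve : \sum_i c i *: e i = \sum_(l <- s0) c' l *: phi l.
    rewrite [RHS]big_tnth; apply: eq_bigr => i _; rewrite /c' /e; congr (_ *: _).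
    by rewrite (tnth_nth (tnth t i)) index_uniq // valK.
  have v0 : \sum_i c i *: e i = 0.
    apply: hinj; last by rewrite hc linear0.
      rewrite ve; exists s0, c'; split => // l ls; exact/hs0.
    exact: span0.
  move=> i; have := congr1 (ip (e i)) v0.
  rewrite (ip0r hip) (ip_sumr hip) (bigD1 i) //= big1 => [|j ji]; last first.
    by rewrite (ipZr hip) he eq_sym (negbTE ji) mulr0.
  by rewrite (ipZr hip) he eqxx mulr1 addr0.
have [K [K0 hK]] := fd_bound hip hipY he hinj'.
exists K; split => // g /span_repr ->.
have -> : Psum phi s0 (fun l => ip (phi l) g) = \sum_i ip (phi (tnth t i)) g *: e i.
  by rewrite /Psum [LHS]big_tnth.
exact: hK.
Qed.

Lemma span_scale a g : spanH phi Om g -> spanH phi Om (a *: g).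
Proof.
move=> [s [c [sOm ->]]]; exists s, (fun l => a * c l); split => //.
by rewrite scaler_sumr; apply: eq_bigr => l _; rewrite scalerA.
Qed.

Lemma invop_bound g : spanH phi Om g -> `|g| <= inv_opnorm A (spanH phi Om) * `|A g|.
Proof.
move=> sg.
have [K [K0 hK]] := span_fd.
set S := [set `|h| | h in [set h | spanH phi Om h /\ `|A h| <= 1]].
have hsup : has_sup S.
  split; first by exists 0, 0; rewrite /= ?normr0 ?linear0 ?normr0 //; split => //; exact: span0.
  exists K => _ [h [sh Ah] <-]; apply: le_trans (hK _ sh) _.
  by rewrite -[leRHS]mulr1 ler_wpM2l.
have [Ag0|Ag0] := eqVneq (A g) 0.
  have -> : g = 0 by apply: hinj => //; [exact: span0|rewrite linear0].
  by rewrite normr0 linear0 normr0 mulr0.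
have tp : 0 < `|A g| by rewrite normr_gt0.
set h := `|A g|^-1 *: g.
have Sh : S `|h|.
  exists h => //; split; first exact: span_scale.
  by rewrite linearZ normrZ normrV ?unitfE ?gt_eqF // normr_id mulVf ?gt_eqF.
have := sup_upper_bound hsup Sh.
rewrite /h normrZ normrV ?unitfE ?gt_eqF // normr_id => hh.
rewrite /inv_opnorm -/S.
by rewrite -ler_pdivrMr // mulrC.
Qed.

Lemma invop_ge0 : 0 <= inv_opnorm A (spanH phi Om).
Proof.
have [K [K0 hK]] := span_fd.
set S := [set `|h| | h in [set h | spanH phi Om h /\ `|A h| <= 1]].
have S0 : S 0.
  exists 0; last by rewrite normr0.
  by rewrite /= linear0 normr0; split => //; exact: span0.
have hsup : has_sup S.
  split; first by exists 0.
  exists K => _ [h [sh Ah] <-]; apply: le_trans (hK _ sh) _.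
  by rewrite -[leRHS]mulr1 ler_wpM2l.
by have := sup_upper_bound hsup S0.
Qed.

End Span.

Lemma opnorm_bound (R : realType) (V U : normedModType R) (A : {linear V -> U}) :
  continuous A -> forall x, `|A x| <= opnorm A * `|x|.
Proof.
move=> hA x.
have := (linear_boundedP A).1 ((linear_bounded_continuous A).2 hA).
move=> [M [_ hM]].
have hr : forall y, `|A y| <= (`|M| + 1) * `|y|.
  apply: hM; have := ler_norm M; lra.
set S := [set `|A h| | h in [set h : V | `|h| <= 1]].
have hsup : has_sup S.
  split; first by exists `|A 0|, 0; rewrite //= normr0.
  exists (`|M| + 1) => _ [h /= h1 <-]; apply: le_trans (hr h) _.
  rewrite -[leRHS]mulr1 ler_wpM2l //; have := normr_ge0 M; lra.
have [->|x0] := eqVneq x 0; first by rewrite linear0 !normr0 mulr0.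
have tp : 0 < `|x| by rewrite normr_gt0.
set h := `|x|^-1 *: x.
have Sh : S `|A h|.
  exists h => //=; rewrite /h normrZ normrV ?unitfE ?gt_eqF // normr_id mulVf ?gt_eqF //.
have := sup_upper_bound hsup Sh.
rewrite /h linearZ normrZ normrV ?unitfE ?gt_eqF // normr_id => hh.
by rewrite /opnorm -/S -ler_pdivrMr // mulrC.
Qed.

Lemma opnorm_ge0 (R : realType) (V U : normedModType R) (A : {linear V -> U}) :
  continuous A -> 0 <= opnorm A.
Proof.
move=> hA.
have := (linear_boundedP A).1 ((linear_bounded_continuous A).2 hA).
move=> [M [_ hM]].
have hr : forall y, `|A y| <= (`|M| + 1) * `|y|.
  apply: hM; have := ler_norm M; lra.
set S := [set `|A h| | h in [set h : V | `|h| <= 1]].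
have S0 : S 0.
  exists 0; last by rewrite linear0 normr0.
  by rewrite /= normr0.
have hsup : has_sup S.
  split; first by exists 0.
  exists (`|M| + 1) => _ [h /= h1 <-]; apply: le_trans (hr h) _.
  rewrite -[leRHS]mulr1 ler_wpM2l //; have := normr_ge0 M; lra.
by have := sup_upper_bound hsup S0.
Qed.

Section WL1.
Variables (R : realType) (H : normedModType R) (ip : H -> H -> R).
Hypothesis hip : inner_product_of ip.
Variables (Lam : choiceType) (phi : Lam -> H).
Hypothesis hon : forall l l', ip (phi l) (phi l') = (l == l')%:R.
Variable kappa : Lam -> R.
Hypothesis hk : forall l, 0 <= kappa l.

Local Notation W := (wl1 ip phi kappa).
Local Notation cf l y := (ip (phi l) y).

Definition rest (s : seq Lam) (y : H) :=
  \esum_(l in [set l | l \notin s]) (kappa l * `|cf l y|)%:E.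

Lemma rest_ge0 s y : (0 <= rest s y)%E.
Proof. by apply: esum_ge0 => l _; rewrite lee_fin mulr_ge0. Qed.

Lemma rest_eq s y y' : (forall l, l \notin s -> cf l y = cf l y') -> rest s y = rest s y'.
Proof. by move=> e; apply: eq_esum => l /= ls; rewrite e. Qed.

Lemma wl1_split s y : uniq s ->
  W y = ((\sum_(l <- s) kappa l * `|cf l y|)%:E + rest s y)%E.
Proof.
elim: s => [|a s IH] /=.
  move=> _; rewrite big_nil add0e /rest /wl1; congr esum.
  by apply/seteqP; split => l //=.
move=> /andP[nas us].
have hr : rest s y = ((kappa a * `|cf a y|)%:E + rest (a :: s) y)%E.
  rewrite /rest (esumID [set a]); last by move=> l _; rewrite lee_fin mulr_ge0.
  congr (_ + _)%E.
    have -> : [set l | l \notin s] `&` [set a] = [set a].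
      apply/seteqP; split => l /=; first by case.
      by move=> ->; split.
    by rewrite esum_set1 // lee_fin mulr_ge0.
  congr esum; apply/seteqP; split => l /=.
    by move=> [ls /eqP la]; rewrite in_cons negb_or la ls.
  by rewrite in_cons negb_or => /andP[/eqP la ls]; split.
by rewrite IH // hr big_cons EFinD addeCA addeA.
Qed.

Lemma wl1_change1 l y y' : (forall l', l' != l -> cf l' y = cf l' y') ->
  (W y' + (kappa l * `|cf l y|)%:E = W y + (kappa l * `|cf l y'|)%:E)%E.
Proof.
move=> e.
rewrite !(@wl1_split [:: l]) // !big_cons !big_nil !addr0.
rewrite (@rest_eq [:: l] y' y); last first.
  by move=> l'; rewrite mem_seq1 => /e ->.
rewrite addeAC [RHS]addeAC; congr (_ + _)%E; exact: addeC.
Qed.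

Variables (hs eta : H).
Hypothesis h13 : forall z, (W z >= W hs + (ip eta (z - hs))%:E)%E.
Variable Ws : R.
Hypothesis hWs : W hs = Ws%:E.

Lemma D1 h s : uniq s ->
  ((Ws + ip eta (h - hs) +
    \sum_(l <- s) (kappa l * `|cf l h| - kappa l * `|cf l hs| - cf l eta * (cf l h - cf l hs)))%:E
   <= W h)%E.
Proof.
move=> us.
case hWh: (W h) => [Wh| |]; last 2 first.
- by rewrite leey.
- have : (0 <= W h)%E by apply: esum_ge0 => l _; rewrite lee_fin mulr_ge0.
  by rewrite hWh.
set c := fun l => cf l (h - hs).
set z := h - Psum phi s c.
have cz : forall l, cf l z = if l \in s then cf l hs else cf l h.
  move=> l; rewrite /z (ipBr hip) (coef_Psum hip hon) // /c (ipBr hip).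
  by case: ifP => _; [ring | ring].
have hrest : rest s z = rest s h.
  by apply: rest_eq => l /negbTE ls; rewrite cz ls.
have := wl1_split h us; rewrite hWh => eh.
have := wl1_split z us; rewrite hrest => ez.
have rfin : rest s h = (Wh - \sum_(l <- s) kappa l * `|cf l h|)%:E.
  move: eh (rest_ge0 s h); case: (rest s h) => [r| |] //.
  by rewrite -EFinD => -[->] _; congr (_%:E); ring.
have := h13 z; rewrite ez rfin hWs -!EFinD lee_fin => key.
have e1 : ip eta (z - hs) = ip eta (h - hs) - \sum_(l <- s) c l * cf l eta.
  rewrite /z addrAC (ipBr hip (h - hs)) /Psum (ip_sumr hip); congr (_ - _).
  by apply: eq_bigr => l _; rewrite (ipZr hip) (ipC hip).
have e2 : \sum_(l <- s) kappa l * `|cf l hs| = \sum_(l <- s) kappa l * `|cf l z|.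
  by rewrite !big_seq; apply: eq_bigr => l ls; rewrite cz ls.
rewrite lee_fin.
rewrite -e2 e1 in key.
have e3 : \sum_(l <- s) (kappa l * `|cf l h| - kappa l * `|cf l hs| - cf l eta * (cf l h - cf l hs))
  = \sum_(l <- s) kappa l * `|cf l h| - \sum_(l <- s) kappa l * `|cf l hs|
    - \sum_(l <- s) c l * cf l eta.
  rewrite -!sumrB; apply: eq_bigr => l _; rewrite /c (ipBr hip); ring.
rewrite e3; lra.
Qed.

End WL1.

Lemma energy (R : realType) (delta C n nu nv p1 p2 q i1 i2 i3 D : R) :
  0 < delta -> 0 < C -> 0 <= n -> 0 <= nu -> 0 <= nv -> nu ^+ 2 + nv ^+ 2 = n ^+ 2 ->
  0 <= p1 -> 0 <= p2 -> 0 <= q -> q <= delta ->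
  `|i1| <= nu * p1 -> `|i2| <= nv * p2 -> `|i3| <= nv * q -> 0 <= D ->
  p1 ^+ 2 / 2 + p2 ^+ 2 / 2 + C * delta * D + C * delta * (i1 + i2 + i3) <= q ^+ 2 / 2 ->
  D <= (1 + C * n) ^+ 2 / (2 * C) * delta /\ p2 <= delta + 2 * (C * delta) * n.
Proof.
move=> d0 C0 n0 nu0 nv0 hn p10 p20 q0 qd h1 h2 h3 D0 hE.
set al := C * delta.
have hE' := hE; rewrite -/al in hE'.
have al0 : 0 < al by rewrite mulr_gt0.
have nvn : nv <= n by nra.
have nun : nu <= n by nra.
have j1 : - i1 <= nu * p1 by have := ler_norm (- i1); rewrite normrN; lra.
have j2 : - i2 <= nv * p2 by have := ler_norm (- i2); rewrite normrN; lra.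
have j3 : - i3 <= nv * q by have := ler_norm (- i3); rewrite normrN; lra.
have k1 : al * nu * p1 - p1 ^+ 2 / 2 <= al ^+ 2 * nu ^+ 2 / 2.
  have := sqr_ge0 (p1 - al * nu); nra.
have k2 : al * nv * p2 - p2 ^+ 2 / 2 <= al ^+ 2 * nv ^+ 2 / 2.
  have := sqr_ge0 (p2 - al * nv); nra.
have k3 : q ^+ 2 / 2 + al * nv * q <= delta ^+ 2 / 2 + al * n * delta.
  have : q ^+ 2 <= delta ^+ 2 by nra.
  have : nv * q <= n * delta by nra.
  nra.
have a1 : al * (- i1) <= al * nu * p1 by rewrite -mulrA ler_wpM2l // ltW.
have a2 : al * (- i2) <= al * nv * p2 by rewrite -mulrA ler_wpM2l // ltW.
have a3 : al * (- i3) <= al * nv * q by rewrite -mulrA ler_wpM2l // ltW.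
have hD : al * D <= (delta + al * n) ^+ 2 / 2.
  have : al * (i1 + i2 + i3) = - (al * (- i1)) - al * (- i2) - al * (- i3) by ring.
  have : al ^+ 2 * nu ^+ 2 + al ^+ 2 * nv ^+ 2 = al ^+ 2 * n ^+ 2 by rewrite -mulrDr hn.
  have : (delta + al * n) ^+ 2 = delta ^+ 2 + 2 * (al * n * delta) + al ^+ 2 * n ^+ 2 by ring.
  move=> *; lra.
split.
  have e : (1 + C * n) ^+ 2 / (2 * C) * delta = (delta + al * n) ^+ 2 / 2 / al.
    rewrite /al; field; rewrite ?gt_eqF //; nra.
  rewrite e ler_pdivlMr // mulrC //.
have hp2 : (p2 - al * nv) ^+ 2 <= (delta + al * n) ^+ 2.
  have : al * D >= 0 by rewrite mulr_ge0 // ltW.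
  have : al * (i1 + i2 + i3) = - (al * (- i1)) - al * (- i2) - al * (- i3) by ring.
  have : al ^+ 2 * nu ^+ 2 + al ^+ 2 * nv ^+ 2 = al ^+ 2 * n ^+ 2 by rewrite -mulrDr hn.
  have : (delta + al * n) ^+ 2 = delta ^+ 2 + 2 * (al * n * delta) + al ^+ 2 * n ^+ 2 by ring.
  have : (p2 - al * nv) ^+ 2 = p2 ^+ 2 - 2 * (al * nv * p2) + al ^+ 2 * nv ^+ 2 by ring.
  move=> *; lra.
have : p2 - al * nv <= delta + al * n.
  have h0 : 0 <= delta + al * n by rewrite addr_ge0 ?mulr_ge0 // ltW.
  nra.
have : al * nv <= al * n by rewrite ler_wpM2l // ltW.
lra.
Qed.

Lemma oneD (R : realType) (k e b : R) : 0 <= k ->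
  (forall t, e * (t - b) <= k * `|t| - k * `|b|) -> `|e| <= k /\ k * `|b| <= e * b.
Proof.
move=> k0 h; split.
  have h1 := h (b + 1); have h2 := h (b - 1).
  have t1 : `|b + 1| <= `|b| + 1 by apply: le_trans (ler_normD _ _) _; rewrite normr1.
  have t2 : `|b - 1| <= `|b| + 1 by apply: le_trans (ler_normB _ _) _; rewrite normr1.
  have e1 : e * (b + 1 - b) = e by ring.
  have e2 : e * (b - 1 - b) = - e by ring.
  rewrite e1 in h1; rewrite e2 in h2.
  have u1 : k * `|b + 1| <= k * `|b| + k by have := ler_wpM2l k0 t1; rewrite mulrDr mulr1.
  have u2 : k * `|b - 1| <= k * `|b| + k by have := ler_wpM2l k0 t2; rewrite mulrDr mulr1.
  case: (lerP 0 e) => he; [rewrite ger0_norm // | rewrite ltr0_norm //]; lra.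
have := h 0; rewrite normr0 mulr0; lra.
Qed.

Lemma fin1 (R : realType) (e f : \bar R) (r : R) :
  (0 <= e)%E -> (e + r%:E <= f)%E -> (f < +oo)%E -> exists x, e = x%:E.
Proof.
case: e => [x| |] //; first by exists x.
move=> _ /=; case: f => [y| |] //=.
Qed.

Lemma fin2 (R : realType) (a b : \bar R) (P Q al : R) : 0 < al ->
  (0 <= a)%E -> (0 <= b)%E -> (P%:E + al%:E * (a + b) <= Q%:E)%E ->
  exists x y, a = x%:E /\ b = y%:E.
Proof.
move=> al0.
have hy : (al%:E * +oo = +oo :> \bar R)%E by rewrite mulry gtr0_sg // mul1e.
case: a => [x| |] //; case: b => [y| |] //.
- by move=> _ _ _; exists x, y.
- by move=> _ _ /=; rewrite hy.
- by move=> _ _ /=; rewrite hy.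
- by move=> _ _ /=; rewrite hy.
Qed.

End Helpers.
Import Helpers.
Unset Implicit Arguments. Set Strict Implicit. Set Printing Implicit Defensive.

Theorem mainTheorem1 (R : realType)
  (X H Y : completeNormedModType R)
  (ipX : X -> X -> R) (ipH : H -> H -> R) (ipY : Y -> Y -> R)
  (hX : separable_hilbert ipX) (hH : separable_hilbert ipH) (hY : separable_hilbert ipY)
  (W : {linear X -> H}) (A : {linear H -> Y})
  (hW : bounded_linear W) (hA : bounded_linear A)
  (Wadj : H -> X) (Aadj : Y -> H)
  (hWadj : is_adjoint ipX ipH W Wadj) (hAadj : is_adjoint ipH ipY A Aadj)
  (Rf : X -> \bar R)
  (hRp : proper_fun Rf) (hRc : convex_fun Rf) (hRl : weakly_lsc ipX Rf)
  (Lam : choiceType) (hLam : countable [set: Lam])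
  (phi : Lam -> H) (hphi : orthonormal_basis ipH phi)
  (kappa : Lam -> R) (a : R) (ha : 0 < a) (hk : forall l, a <= kappa l)
  (hdom : exists x : X, (Rf x + wl1 ipH phi kappa (W x) < +oo)%E)
  (xs : X) (hs : H) (ys : Y)
  (h11 : W xs = hs /\ A hs = ys)
  (u : H) (h12 : subdiff ipX Rf xs (Wadj u))
  (v : Y) (h13 : subdiff ipH (wl1 ipH phi kappa) hs (Aadj v - u))
  (h14 : injective_on A (spanH phi (Omega ipH phi kappa (Aadj v - u))))
  (C : R) (hC : 0 < C) :
  let eta := Aadj v - u in
  let Om := Omega ipH phi kappa eta in
  let nuv := Num.sqrt (`|u| ^+ 2 + `|v| ^+ 2) in
  let Ninv := inv_opnorm A (spanH phi Om) in
  let c := (1 + C * nuv) ^+ 2 / (2 * C) in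
  let d := 2 * Ninv * (1 + C * nuv)
           + (if Om == setT then 0
              else (1 + Ninv * opnorm A) / mgap ipH phi kappa eta * c) in
  forall (delta : R), 0 < delta ->
  forall (ydelta : Y), `|ydelta - ys| <= delta ->
  let alpha := C * delta in
  let B := fun (x : X) (h : H) =>
    ((1 / 2 * `|W x - h| ^+ 2 + 1 / 2 * `|A h - ydelta| ^+ 2)%:E
     + alpha%:E * (Rf x + wl1 ipH phi kappa h))%E in
  forall (xa : X) (ha' : H),
    (forall (x : X) (h : H), (B xa ha' <= B x h)%E) ->
    (bregman ipX Rf (Wadj u) xa xs <= (c * delta)%:E)%E /\
    `|ha' - hs| <= d * delta.
Proof.
move=> eta Om nuv Ninv c d delta d0 ydelta hyd alpha B xa ha' hmin.
have [hipX _] := hX. have [hipH _] := hH. have [hipY _] := hY.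
have [hon hcomp] := hphi.
have hk0 : forall l, 0 <= kappa l by move=> l; apply: le_trans (ltW ha) (hk l).
have [hsW ysA] := h11.
have al0 : 0 < alpha by rewrite mulr_gt0.
have [Rs hRs] : exists Rs, Rf xs = Rs%:E.
  have [R0 [x0 hx0]] := hRp.
  exact: fin1 (R0 xs) (h12 x0) hx0.
have W10 : wl1 ipH phi kappa 0 = 0%E.
  by apply: esum1 => l _; rewrite ip0r // normr0 mulr0.
have [Ws hWs] : exists Ws, wl1 ipH phi kappa hs = Ws%:E.
  have h0 := h13 0.
  rewrite W10 in h0.
  apply: fin1 _ h0 _; last by rewrite ltry.
  by apply: esum_ge0 => l _; rewrite lee_fin mulr_ge0.
have hB := hmin xs hs.
rewrite /B hRs hWs -[(Rs%:E + Ws%:E)%E]EFinD -EFinM -EFinD in hB.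
have W1ge0 : forall h, (0 <= wl1 ipH phi kappa h)%E.
  by move=> h; apply: esum_ge0 => l _; rewrite lee_fin mulr_ge0.
have [Rx [Wh [hRx hWh]]] := fin2 al0 (hRp.1 xa) (W1ge0 ha') hB.
rewrite hRx hWh -[(Rx%:E + Wh%:E)%E]EFinD -EFinM -EFinD lee_fin in hB.
have hDR := h12 xa; rewrite hRx hRs -EFinD lee_fin in hDR.
have hD1 := h13 ha'; rewrite hWh hWs -EFinD lee_fin in hD1.
set DR := Rx - Rs - ipX (Wadj u) (xa - xs).
set D1v := Wh - Ws - ipH eta (ha' - hs).
have DR0 : 0 <= DR by rewrite /DR; lra.
have D10 : 0 <= D1v by rewrite /D1v; lra.
have adjW : ipX (Wadj u) (xa - xs) = ipH u (W xa) - ipH u hs.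
  by rewrite (ipC hipX) hWadj linearB hsW (ipC hipH) (ipBr hipH).
have adjA : ipH eta (ha' - hs) = ipY v (A ha') - ipY v ys - ipH u ha' + ipH u hs.
  rewrite /eta (ipBl hipH) (ipC hipH) hAadj linearB ysA (ipC hipY) (ipBr hipY) (ipBr hipH).
  ring.
have nuv0 : 0 <= nuv by apply: sqrtr_ge0.
have nuv2 : `|u| ^+ 2 + `|v| ^+ 2 = nuv ^+ 2.
  by rewrite /nuv sqr_sqrtr // addr_ge0 // sqr_ge0.
have hE : `|W xa - ha'| ^+ 2 / 2 + `|A ha' - ydelta| ^+ 2 / 2 + C * delta * (DR + D1v)
   + C * delta * (ipH u (W xa - ha') + ipY v (A ha' - ydelta) + ipY v (ydelta - ys))
   <= `|ydelta - ys| ^+ 2 / 2.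
  rewrite hsW subrr normr0 ysA (distrC ys) in hB.
  rewrite (ipBr hipH) !(ipBr hipY).
  rewrite /DR /D1v adjW adjA in DR0 D10 *.
  rewrite -/alpha.
  have e0 : 1 / 2 * (0:R) ^+ 2 = 0 by rewrite expr2 !mulr0.
  rewrite e0 in hB.
  lra.
have [hE1 hE2] := @energy R delta C nuv `|u| `|v| `|W xa - ha'| `|A ha' - ydelta|
  `|ydelta - ys| (ipH u (W xa - ha')) (ipY v (A ha' - ydelta)) (ipY v (ydelta - ys))
  (DR + D1v) d0 hC nuv0 (normr_ge0 _) (normr_ge0 _) nuv2 (normr_ge0 _) (normr_ge0 _)
  (normr_ge0 _) hyd (CS hipH _ _) (CS hipY _ _) (CS hipY _ _) (addr_ge0 DR0 D10) hE.
have D1c : D1v <= c * delta by rewrite /c; lra.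
split.
  rewrite /bregman hRx hRs -!EFinB lee_fin.
  rewrite /c; rewrite -/DR; lra.
have hAz : `|A ha' - ys| <= 2 * (1 + C * nuv) * delta.
  have : `|A ha' - ys| <= `|A ha' - ydelta| + `|ydelta - ys|.
    by rewrite -[X in `|X|](subrKA ydelta); apply: ler_normD.
  lra.
have [sG [usG hsG]] := finite_big hipH hon eta ha.
have [s0 [us0 hs0]] : exists s0, uniq s0 /\ forall l, Om l <-> l \in s0.
  apply: (@enum_bounded _ _ (size sG)) => s us sP.
  apply: uniq_leq_size => // l /sP Oml; apply/hsG; rewrite /coef.
  by move: Oml; rewrite /Om /Omega /= => ->; apply: hk.
have oneDl : forall l, `|ipH (phi l) eta| <= kappa l /\
    kappa l * `|ipH (phi l) hs| <= ipH (phi l) eta * ipH (phi l) hs.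
  move=> l; apply: oneD (hk0 l) _ => t.
  set z := hs + (t - ipH (phi l) hs) *: phi l.
  have cz : forall l', ipH (phi l') z = ipH (phi l') hs + (t - ipH (phi l) hs) * (l' == l)%:R.
    by move=> l'; rewrite (ipDr hipH) (ipZr hipH) hon eq_sym.
  have hch := @wl1_change1 _ _ ipH _ phi kappa hk0 l hs z.
  have hch' : (wl1 ipH phi kappa z + (kappa l * `|ipH (phi l) hs|)%:E
      = Ws%:E + (kappa l * `|t|)%:E)%E.
    rewrite -hWs.
    have -> : t = ipH (phi l) z by rewrite cz eqxx mulr1 addrC subrK.
    by apply: hch => l' nl'; rewrite cz (negbTE nl') mulr0 addr0.
  have hWz : wl1 ipH phi kappa z = (Ws + kappa l * `|t| - kappa l * `|ipH (phi l) hs|)%:E.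
    move: hch' (W1ge0 z); case: (wl1 ipH phi kappa z) => [wz| |] //.
    by rewrite -!EFinD => -[e] _; congr (_%:E); lra.
  have := h13 z; rewrite hWz hWs -EFinD lee_fin.
  have -> : z - hs = (t - ipH (phi l) hs) *: phi l by rewrite /z addrC addKr.
  rewrite (ipZr hipH) (ipC hipH (eta)).
  by move=> h; rewrite mulrC; lra.
have nOm : forall l, l \notin s0 -> `|ipH (phi l) eta| < kappa l.
  move=> l ls; have [h1 _] := oneDl l.
  rewrite lt_neqAle h1 andbT; apply/eqP => e.
  have : Om l by rewrite /Om /Omega /=.
  by move/hs0; rewrite (negbTE ls).
have hsOff : forall l, l \notin s0 -> ipH (phi l) hs = 0.
  move=> l ls; have [h1 h2] := oneDl l; have h3 := nOm l ls.
  apply/eqP; rewrite -normr_eq0; apply/negPn/negP => nz.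
  have p : 0 < `|ipH (phi l) hs| by rewrite lt_def nz normr_ge0.
  have h4 := ler_norm (ipH (phi l) eta * ipH (phi l) hs); rewrite normrM in h4.
  nra.
set T := fun l => kappa l * `|ipH (phi l) ha'| - kappa l * `|ipH (phi l) hs|
  - ipH (phi l) eta * (ipH (phi l) ha' - ipH (phi l) hs).
have T0 : forall l, 0 <= T l.
  move=> l; have [h1 h2] := oneDl l; rewrite /T.
  have h4 := ler_norm (ipH (phi l) eta * ipH (phi l) ha'); rewrite normrM in h4.
  have h5 : `|ipH (phi l) eta| * `|ipH (phi l) ha'| <= kappa l * `|ipH (phi l) ha'|.
    by rewrite ler_wpM2r.
  lra.
have Toff : forall l, l \notin s0 ->
    (kappa l - `|ipH (phi l) eta|) * `|ipH (phi l) ha' - ipH (phi l) hs| <= T l.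
  move=> l ls; rewrite /T hsOff // subr0 normr0 mulr0 subr0.
  have h4 := ler_norm (ipH (phi l) eta * ipH (phi l) ha'); rewrite normrM in h4.
  rewrite mulrBl; lra.
have hsum : forall F, uniq F -> \sum_(l <- F) T l <= D1v.
  move=> F uF; have := D1 hipH hon hk0 h13 hWs ha' uF.
  rewrite hWh lee_fin /D1v /T; lra.
set z0 := ha' - hs.
set Q := Psum phi s0 (fun l => ipH (phi l) z0).
set r := z0 - Q.
have cr : forall l, ipH (phi l) r = if l \in s0 then 0 else ipH (phi l) ha' - ipH (phi l) hs.
  move=> l; rewrite /r (ipBr hipH) /Q (coef_Psum hipH hon) //.
  by case: ifP => _; rewrite ?subrr // subr0 /z0 (ipBr hipH).
have Qspan : spanH phi Om Q.
  by exists s0, (fun l => ipH (phi l) z0); split => // l /hs0.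
have hQ := invop_bound hipH hipY hon us0 hs0 h14 Qspan.
have N0 : 0 <= Ninv := invop_ge0 hipH hipY hon us0 hs0 h14.
have nA0 : 0 <= opnorm A := opnorm_ge0 hA.
have hAr := opnorm_bound hA r.
have hAQ : `|A Q| <= 2 * (1 + C * nuv) * delta + opnorm A * `|r|.
  have -> : A Q = A z0 - A r by rewrite -linearB /r opprB addrC subrK.
  rewrite /z0 linearB ysA.
  apply: le_trans (ler_normB _ _) _; lra.
have hz : `|z0| <= `|Q| + `|r|.
  by rewrite -[X in `|X|](subrK Q) addrC ler_normD.
have hNQ : Ninv * `|A Q| <= Ninv * (2 * (1 + C * nuv) * delta + opnorm A * `|r|).
  by rewrite ler_wpM2l.
rewrite /d; case: eqP => hOm.
  have r0 : r = 0.
    apply: hcomp => l; rewrite cr.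
    have : Om l by rewrite hOm.
    by move/hs0 => ->.
  rewrite r0 normr0 mulr0 addr0 in hNQ.
  rewrite r0 normr0 addr0 in hz.
  rewrite -/Ninv in hQ.
  rewrite -/z0 addr0; lra.
rewrite -/Ninv in hQ.
have [l0 nl0] : exists l0, ~ Om l0.
  apply/existsNP => hall; apply: hOm; apply/seteqP; split => // l _; exact: hall l.
set g := fun l => kappa l - `|ipH (phi l) eta|.
have notOm : forall l, ~ Om l -> l \notin s0 by move=> l nl; apply/negP => /hs0.
have gpos : forall l, l \notin s0 -> 0 < g l.
  by move=> l ls; rewrite /g subr_gt0; exact: nOm.
have a2 : 0 < a / 2 by rewrite divr_gt0.
have [s1 [us1 hs1]] := finite_big hipH hon eta a2.
have [mu [mu0 [mua hmu]]] : exists mu, 0 < mu /\ mu <= a / 2 /\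
    forall l, l \in s1 -> l \notin s0 -> mu <= g l.
  elim: (s1) => [|b s IH]; first by exists (a / 2); split => //; split.
  have [mu [mu0 [mua hmu]]] := IH.
  case: (boolP (b \in s0)) => bs0.
  - exists mu; split => //; split => // l; rewrite in_cons => /orP[/eqP-> |ls].
      by rewrite bs0.
    exact: hmu.
  - exists (Num.min mu (g b)); split; first by rewrite lt_min mu0 gpos.
    split; first by rewrite ge_min mua.
    move=> l; rewrite in_cons => /orP[/eqP-> _|ls nls].
      by rewrite ge_min lexx orbT.
    by rewrite ge_min hmu.
have gmu : forall l, l \notin s0 -> mu <= g l.
  move=> l ls; case: (boolP (l \in s1)) => l1; first exact: hmu.
  have : ~ (a / 2 <= `|coef ipH phi l eta|) by move/hs1; rewrite (negbTE l1).
  rewrite /coef => /negP; rewrite -ltNge => hl.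
  have := hk l; rewrite /g; lra.
set m := mgap ipH phi kappa eta.
set S := [set kappa l - `|ipH (phi l) eta| | l in ~` Om].
have Sne : S !=set0 by exists (g l0), l0.
have Slb : has_lbound S.
  exists 0 => _ [l _ <-]; have [h1 _] := oneDl l; rewrite subr_ge0.
  exact: h1.
have mg : forall l, l \notin s0 -> m <= g l.
  move=> l ls; apply: (ge_inf Slb); exists l => //; move=> /hs0; rewrite (negbTE ls).
  by [].
have mmu : mu <= m.
  apply: lb_le_inf Sne _ => _ [l nl <-]; exact: gmu (notOm l nl).
have m0 : 0 < m by apply: lt_le_trans mmu.
have hr : `|r| <= D1v / m.
  apply: (normT hipH hon hcomp hLam) => F uF.
  apply: (@le_trans _ _ (\sum_(l <- F) T l / m)).
    apply: ler_sum => l _; rewrite cr; case: ifP => ls.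
      by rewrite normr0 divr_ge0 // ltW.
    rewrite ler_pdivlMr //.
    apply: le_trans (Toff l (negbT ls)); rewrite mulrC ler_wpM2r //.
    exact: mg (negbT ls).
  by rewrite -mulr_suml ler_pM2r ?invr_gt0 // hsum.
have hrc : `|r| <= c * delta / m.
  apply: le_trans hr _; rewrite ler_pM2r ?invr_gt0 //.
set k := 1 + Ninv * opnorm A.
have k0 : 0 <= k by rewrite addr_ge0 ?mulr_ge0.
have hkr : k * `|r| <= k * (c * delta / m) by rewrite ler_wpM2l.
have e1 : k / m * c * delta = k * (c * delta / m) by ring.
rewrite mulrDl e1 -/z0.
rewrite /k in hkr *.
lra.
Qed.
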